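(* Let $N\in\mathbb{N}$ with $N\ge3$, $s\in\mathbb{N}$, and $n\in\mathbb{N}$ with $n\ge n^{[1]}(s)$. Then there is a real $E$ with $|E|\le C^{[3]}_N(s)\,n^{-\frac{N+2}{2}}$ such that \[ \frac{e^{2\pi\sqrt{\frac{n+s}{3}}}}{8\cdot3^{3/4}\sqrt\pi(n+s)^{5/4}}=\frac{e^{2\pi\sqrt{\frac n3}}}{8\cdot3^{3/4}\sqrt\pi\,n^{5/4}}\left(\sum_{m=0}^{N+1}\frac{d^{[2]}_s(m)}{n^{\frac m2}}+E\right). \]
   Context: $n^{[1]}(s):=2s^4$ if $s\ge2$ and $n^{[1]}(1):=4$. For $m\in\mathbb{N}_0$: $e^{[1]}_s(0):=1$, $e^{[1]}_s(m):=\frac{s^m(2m-1)!}{(-4)^m}\sum_{\nu=1}^{m}\frac{(-4\pi^2s/3)^\nu}{(2\nu-1)!(\nu+m)!(m-\nu)!}$ ($m\ge1$); $o^{[1]}_s(m):=\frac{\pi s^{m+1}(2m)!}{\sqrt3(-4)^m}\sum_{\nu=0}^{m}\frac{(-4\pi^2s/3)^\nu}{(2\nu)!(m-\nu)!(\nu+m+1)!}$; $e^{[2]}_s(m):=\binom{-5/4}{m}s^m$; $e^{[3]}_s(m):=\sum_{k=0}^m e^{[1]}_s(k)e^{[2]}_s(m-k)$, $o^{[3]}_s(m):=\sum_{k=0}^m o^{[1]}_s(k)e^{[2]}_s(m-k)$; $d^{[2]}_s(2m):=e^{[3]}_s(m)$, $d^{[2]}_s(2m+1):=o^{[3]}_s(m)$.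 With $\kappa_s:=\cosh(2\pi\sqrt{s/3})$, $C^{[1]}_N(s):=1.5s^{\frac{N+3}{2}}\kappa_s$, $C^{[2]}_N(s):=\frac{20s}{11}(\frac{5s}{4})^{N/2}$, and $C^{[3]}_N(s):=2.7C^{[1]}_N(s)+(1+1.2\sqrt s)C^{[2]}_N(s)+((20.5+12s)C^{[2]}_N(s)+0.7)\kappa_s$. *)

(* Defs.v *)
From Stdlib Require Import Reals Lra Lia Arith Factorial.
Open Scope R_scope.

(* sum_{k=a}^{b} f k (empty, = 0, when b < a) *)
Fixpoint sumR (a : nat) (len : nat) (f : nat -> R) : R :=
  match len with
  | O => 0
  | S l => f a + sumR (S a) l f
  end.
Definition sum_range (a b : nat) (f : nat -> R) : R := sumR a (S b - a) f.

Definition factR (k : nat) : R := INR (fact k).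

Definition n1 (s : nat) : nat := if (s <=? 1)%nat then 4%nat else (2 * s ^ 4)%nat.

Definition e1 (s m : nat) : R :=
  match m with
  | O => 1
  | S _ =>
    (INR s) ^ m * factR (2 * m - 1) / (-4) ^ m *
    sum_range 1 m (fun nu => (- 4 * PI ^ 2 * INR s / 3) ^ nu /
        (factR (2 * nu - 1) * factR (nu + m) * factR (m - nu)))
  end.

Definition o1 (s m : nat) : R :=
  PI * (INR s) ^ (m + 1) * factR (2 * m) / (sqrt 3 * (-4) ^ m) *
  sum_range 0 m (fun nu => (- 4 * PI ^ 2 * INR s / 3) ^ nu /
      (factR (2 * nu) * factR (m - nu) * factR (nu + m + 1))).

Fixpoint fallR (a : R) (m : nat) : R :=
  match m with O => 1 | S k => fallR a k * (a - INR k) end.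
Definition gbinom (a : R) (m : nat) : R := fallR a m / factR m.

Definition e2 (s m : nat) : R := gbinom (- 5 / 4) m * (INR s) ^ m.

Definition e3 (s m : nat) : R := sum_range 0 m (fun k => e1 s k * e2 s (m - k)).
Definition o3 (s m : nat) : R := sum_range 0 m (fun k => o1 s k * e2 s (m - k)).

Definition dd2 (s j : nat) : R :=
  if Nat.even j then e3 s (Nat.div2 j) else o3 s (Nat.div2 j).

Definition kappa (s : nat) : R := cosh (2 * PI * sqrt (INR s / 3)).

Definition C1 (N s : nat) : R := 1.5 * Rpower (INR s) ((INR N + 3) / 2) * kappa s.
Definition C2 (N s : nat) : R := 20 * INR s / 11 * Rpower (5 * INR s / 4) (INR N / 2).
Definition C3 (N s : nat) : R :=
  2.7 * C1 N s + (1 + 1.2 * sqrt (INR s)) * C2 N s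
  + ((20.5 + 12 * INR s) * C2 N s + 0.7) * kappa s.

Definition mainterm (x : R) : R :=
  exp (2 * PI * sqrt (x / 3)) /
  (8 * Rpower 3 (3 / 4) * sqrt PI * Rpower x (5 / 4)).

(* Main.v *)
Require Import Defs.
From Stdlib Require Import Reals Lra Lia Arith Factorial.
From Coquelicot Require Import Coquelicot.
Open Scope R_scope.

Lemma isp (a b : nat -> R) la lb : is_series a la -> is_series b lb ->
  is_series (fun n => a n + b n) (la + lb).
Proof. intros H1 H2. exact (is_series_plus _ _ _ _ H1 H2). Qed.
Lemma ism (a b : nat -> R) la lb : is_series a la -> is_series b lb ->
  is_series (fun n => a n - b n) (la - lb).
Proof. intros H1 H2. exact (is_series_minus _ _ _ _ H1 H2). Qed.
Lemma iss (c : R) (a : nat -> R) la : is_series a la ->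
  is_series (fun n => c * a n) (c * la).
Proof. intros H1. exact (is_series_scal _ _ _ H1). Qed.
Lemma isx (a b : nat -> R) l : (forall n, a n = b n) -> is_series a l -> is_series b l.
Proof. intros H H1. exact (is_series_ext _ _ _ H H1). Qed.

Lemma sum_n_sf (a : nat -> R) n : sum_n a n = sum_f_R0 a n.
Proof. apply sum_n_Reals. Qed.

Lemma is_series_lim (a : nat -> R) (l : R) : is_series a l -> is_lim_seq (fun n => sum_f_R0 a n) l.
Proof.
  intros H. apply is_lim_seq_ext with (sum_n a). intros; apply sum_n_sf.
  exact H.
Qed.
Lemma lim_is_series (a : nat -> R) (l : R) : is_lim_seq (fun n => sum_f_R0 a n) l -> is_series a l.
Proof.
  intros H. unfold is_series. change (is_lim_seq (sum_n a) l).
  apply (is_lim_seq_ext (fun n => sum_f_R0 a n) (sum_n a)). intros; symmetry; apply sum_n_sf.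
  exact H.
Qed.

Lemma series_abs_le (a b : nat -> R) A B : is_series a A -> is_series b B ->
  (forall n, Rabs (a n) <= b n) -> Rabs A <= B.
Proof.
  intros Ha Hb H.
  apply is_series_lim in Ha. apply is_series_lim in Hb.
  apply is_lim_seq_abs in Ha.
  assert (Hl := is_lim_seq_le _ _ _ _ (fun n => Rle_trans _ _ _ (Rsum_abs a n) (sum_Rle _ _ n (fun k _ => H k))) Ha Hb).
  simpl in Hl. exact Hl.
Qed.

Lemma is_series_shift1 (a : nat -> R) (l : R) : a 0%nat = 0 -> is_series a l ->
  is_series (fun M => a (S M)) l.
Proof.
  intros H0 H. apply is_series_incr_1. rewrite H0. 
  change (is_series a (l + 0)). rewrite Rplus_0_r. exact H.
Qed.

Lemma is_series_shift (d : nat) : forall (a : nat -> R) (l : R),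
  (forall k, (k < d)%nat -> a k = 0) -> is_series a l ->
  is_series (fun M => a (d + M)%nat) l.
Proof.
  induction d; intros a l H0 H.
  - apply isx with a; auto.
  - assert (H1 := is_series_shift1 a l (H0 0%nat ltac:(lia)) H).
    assert (H2 := IHd (fun M => a (S M)) l (fun k Hk => H0 (S k) ltac:(lia)) H1).
    apply isx with (2 := H2). intros n; simpl. reflexivity.
Qed.

Lemma is_series_finite (a : nat -> R) (T : nat) :
  (forall k, (T < k)%nat -> a k = 0) -> is_series a (sum_f_R0 a T).
Proof.
  intros H. apply lim_is_series.
  apply is_lim_seq_ext_loc with (fun _ => sum_f_R0 a T).
  - exists T. intros n Hn. induction n.
    + assert (T = 0%nat) by lia. subst. reflexivity.
    + destruct (Nat.eq_dec T (S n)) as [->|Hne]. reflexivity.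
      simpl. rewrite <- IHn by lia. rewrite H by lia. ring.
  - apply is_lim_seq_const.
Qed.

Lemma is_series_tail (a : nat -> R) (A : R) T : is_series a A ->
  is_series (fun k => a (S T + k)%nat) (A - sum_f_R0 a T).
Proof.
  intros H. apply is_series_incr_n. lia. simpl.
  rewrite sum_n_sf. change (is_series a ((A:R) - sum_f_R0 a T + sum_f_R0 a T)).
  replace ((A:R) - sum_f_R0 a T + sum_f_R0 a T) with (A:R) by ring. exact H.
Qed.

Lemma tail_bound (a : nat -> R) (A C q : R) T : is_series a A -> 0 <= q < 1 ->
  (forall k, Rabs (a k) <= C * q ^ k) ->
  Rabs (A - sum_f_R0 a T)<= C * q ^ (S T) / (1 - q).
Proof.
  intros H Hq Hb.
  apply (series_abs_le _ (fun k => C * q ^ (S T) * q ^ k) _ _ (is_series_tail a A T H)).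
  - unfold Rdiv. apply iss. apply is_series_geom. rewrite Rabs_right; lra.
  - intros k. eapply Rle_trans. apply Hb. rewrite Rmult_assoc, <- pow_add. right. reflexivity.
Qed.

Lemma psum_le (a : nat -> R) (A : R) T : is_series a A -> (forall n, 0 <= a n) ->
  sum_f_R0 a T <= A.
Proof.
  intros H Hp. apply is_series_lim in H.
  apply (is_lim_seq_incr_compare _ _ H). intros n. simpl. specialize (Hp (S n)). lra.
Qed.

Lemma sf_even_odd (f : nat -> R) K :
  sum_f_R0 f (2 * K + 1) = sum_f_R0 (fun i => f (2 * i)%nat) K + sum_f_R0 (fun i => f (2 * i + 1)%nat) K.
Proof.
  induction K. simpl. ring.
  replace (2 * S K + 1)%nat with (S (S (2 * K + 1))) by lia.
  rewrite (tech5 f (S (2 * K + 1))), (tech5 f (2 * K + 1)), IHK.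
  rewrite (tech5 (fun i => f (2 * i)%nat) K), (tech5 (fun i => f (2 * i + 1)%nat) K).
  replace (S (2 * K + 1)) with (2 * S K)%nat by lia.
  replace (S (2 * S K)) with (2 * S K + 1)%nat by lia. ring.
Qed.

Lemma is_series_even (a : nat -> R) (l : R) : is_series a l -> (forall k, a (2 * k + 1)%nat = 0) ->
  is_series (fun k => a (2 * k)%nat) l.
Proof.
  intros H H0. apply lim_is_series. apply is_series_lim in H.
  apply is_lim_seq_ext with (fun k => sum_f_R0 a (2 * k + 1)).
  - intros k. rewrite sf_even_odd. rewrite (sum_eq (fun i => a (2 * i + 1)%nat) (fun _ => 0)). rewrite sum_cte. ring.
    intros; apply H0.
  - apply (is_lim_seq_subseq _ _ (fun k => 2 * k + 1)%nat); auto.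
    intros P [N HN]. exists N. intros n Hn. apply HN. lia.
Qed.

Lemma is_series_odd (a : nat -> R) (l : R) : is_series a l -> (forall k, a (2 * k)%nat = 0) ->
  is_series (fun k => a (2 * k + 1)%nat) l.
Proof.
  intros H H0. apply lim_is_series. apply is_series_lim in H.
  apply is_lim_seq_ext with (fun k => sum_f_R0 a (2 * k + 1)).
  - intros k. rewrite sf_even_odd. rewrite (sum_eq (fun i => a (2 * i)%nat) (fun _ => 0)). rewrite sum_cte. ring.
    intros; apply H0.
  - apply (is_lim_seq_subseq _ _ (fun k => 2 * k + 1)%nat); auto.
    intros P [N HN]. exists N. intros n Hn. apply HN. lia.
Qed.

Lemma exp_series (w : R) : is_series (fun n => w ^ n / INR (fact n)) (exp w).
Proof.
  assert (H := is_exp_Reals w). apply is_pseries_R in H.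
  apply isx with (2 := H). intros n. unfold Rdiv. ring.
Qed.

Lemma pow_neg_even (w : R) k : (- w) ^ (2 * k) = w ^ (2 * k).
Proof. rewrite !pow_mult. f_equal. ring. Qed.
Lemma pow_neg_odd (w : R) k : (- w) ^ (2 * k + 1) = - w ^ (2 * k + 1).
Proof. rewrite !pow_add, pow_neg_even. ring. Qed.

Lemma cosh_series (w : R) : is_series (fun k => w ^ (2 * k) / INR (fact (2 * k))) (cosh w).
Proof.
  assert (H := iss (/2) _ _ (isp _ _ _ _ (exp_series w) (exp_series (- w)))).
  apply is_series_even in H.
  - replace (cosh w) with (/ 2 * (exp w + exp (- w))) by (unfold cosh; field).
    apply isx with (2 := H). intros k. cbv beta. rewrite pow_neg_even. field. apply INR_fact_neq_0.
  - intros k. cbv beta. rewrite pow_neg_odd. field. apply INR_fact_neq_0.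
Qed.

Lemma sinh_series (w : R) : is_series (fun k => w ^ (2 * k + 1) / INR (fact (2 * k + 1))) (sinh w).
Proof.
  assert (H := iss (/2) _ _ (ism _ _ _ _ (exp_series w) (exp_series (- w)))).
  apply is_series_odd in H.
  - replace (sinh w) with (/ 2 * (exp w - exp (- w))) by (unfold sinh; field).
    apply isx with (2 := H). intros k. cbv beta. rewrite pow_neg_odd. field. apply INR_fact_neq_0.
  - intros k. cbv beta. rewrite pow_neg_even. field. apply INR_fact_neq_0.
Qed.

Lemma factR_S k : factR (S k) = INR (S k) * factR k.
Proof. unfold factR. rewrite fact_simpl, mult_INR. reflexivity. Qed.
Lemma factR_pos k : 0 < factR k.
Proof. unfold factR. apply INR_fact_lt_0. Qed.

Lemma gbinom_S a k : gbinom a (S k) = gbinom a k * (a - INR k) / INR (S k).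
Proof.
  unfold gbinom. simpl fallR. rewrite factR_S. field.
  split. apply Rgt_not_eq, factR_pos. apply not_0_INR. lia.
Qed.
Lemma gbinom_0 a : gbinom a 0 = 1.
Proof. unfold gbinom, factR. simpl. field. Qed.

Lemma gbinom_bound a k : Rabs a <= 5/4 -> Rabs (gbinom a k) <= (5/4) ^ k.
Proof.
  intros Ha. induction k.
  - rewrite gbinom_0, Rabs_R1. simpl; lra.
  - rewrite gbinom_S. unfold Rdiv. rewrite !Rabs_mult. simpl pow.
    assert (H1 : 0 < INR (S k)) by (apply lt_0_INR; lia).
    rewrite Rabs_inv, (Rabs_right (INR (S k))) by lra.
    assert (H2 : Rabs (a - INR k) <= 5/4 * INR (S k)).
    { rewrite S_INR. assert (0 <= INR k) by apply pos_INR.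
      apply Rabs_le. split; apply Rabs_le_between in Ha; lra. }
    assert (H3 : Rabs (a - INR k) * / INR (S k) <= 5/4).
    { apply Rmult_le_reg_r with (INR (S k)); auto. rewrite Rmult_assoc, Rinv_l; lra. }
    assert (0 <= Rabs (a - INR k) * / INR (S k)).
    { apply Rmult_le_pos. apply Rabs_pos. left; apply Rinv_0_lt_compat; auto. }
    rewrite Rmult_assoc. rewrite Rmult_comm.
    apply Rmult_le_compat; auto; try apply Rmult_le_pos; try apply Rabs_pos; try lra.
Qed.

Lemma Rpower_1_base y : Rpower 1 y = 1.
Proof. unfold Rpower. rewrite ln_1, Rmult_0_r, exp_0. reflexivity. Qed.

Section Binom.
Variable a : R.
Hypothesis Ha : Rabs a <= 5/4.
Let b := gbinom a.

Lemma binom_radius : Rbar_le (4/5) (CV_radius b).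
Proof.
  destruct (CV_radius_bounded b) as [Hub _]. apply Hub.
  exists 1. intros n. rewrite Rabs_mult, <- RPow_abs.
  rewrite (Rabs_right (4/5)) by lra.
  apply Rle_trans with ((5/4)^n * (4/5)^n).
  apply Rmult_le_compat_r. apply pow_le; lra. apply gbinom_bound; auto.
  rewrite <- Rpow_mult_distr. replace (5/4*(4/5)) with 1 by field. rewrite pow1; lra.
Qed.

Lemma binom_in z : Rabs z <= 1/2 -> Rbar_lt (Rabs z) (CV_radius b).
Proof.
  intros Hz. eapply Rbar_lt_le_trans; [|apply binom_radius]. simpl. lra.
Qed.

Lemma binom_ode z : Rabs z <= 1/2 ->
  (1 + z) * PSeries (PS_derive b) z = a * PSeries b z.
Proof.
  intros Hz.
  assert (Hin := binom_in z Hz).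
  assert (Hd : ex_pseries (PS_derive b) z).
  { apply CV_radius_inside. rewrite CV_radius_derive. auto. }
  assert (HD := PSeries_correct _ _ Hd). apply is_pseries_R in HD.
  assert (HP := PSeries_correct _ _ (CV_radius_inside _ _ Hin)). apply is_pseries_R in HP.
  set (D := PSeries (PS_derive b) z) in *. set (P := PSeries b z) in *.
  assert (Hcoef : forall k, PS_derive b k = (a - INR k) * b k).
  { intros k. unfold PS_derive, b. rewrite gbinom_S. field. apply not_0_INR; lia. }
  assert (H1 : is_series (fun k => (a - INR k) * b k * z ^ k) D).
  { apply isx with (2 := HD). intros k. rewrite Hcoef. reflexivity. }
  assert (H2 : is_series (fun k => INR k * b k * z ^ k) (z * D)).
  { apply is_series_decr_1. simpl. 
    change (is_series (fun k => INR (S k) * b (S k) * z ^ S k) (z * D + - (0 * b 0%nat * 1))).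
    replace (z * D + - (0 * b 0%nat * 1)) with (z * D) by ring.
    apply isx with (2 := iss z _ _ H1). intros k. 
    replace (b (S k)) with (PS_derive b k / INR (S k)).
    rewrite Hcoef. simpl pow. field. apply not_0_INR; lia.
    unfold PS_derive. field. apply not_0_INR; lia. }
  assert (H3 := isp _ _ _ _ H1 H2).
  assert (H4 := iss a _ _ HP).
  assert (E : D + z * D = a * P).
  { rewrite <- (is_series_unique _ _ H3), <- (is_series_unique _ _ H4).
    apply Series_ext. intros; ring. }
  rewrite <- E. ring.
Qed.

Lemma binom_value z : Rabs z <= 1/2 -> PSeries b z = Rpower (1 + z) a.
Proof.
  intros Hz.
  set (Q := fun t => PSeries b t * Rpower (1 + t) (- a)).
  assert (HQ : forall c, Rabs (c - 0) <= 1/2 -> is_derive Q c 0).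
  { intros c Hc. rewrite Rminus_0_r in Hc. apply is_derive_Reals.
    assert (Hc1 : 0 < 1 + c) by (apply Rabs_le_between in Hc; lra).
    assert (HdP : derivable_pt_lim (PSeries b) c (PSeries (PS_derive b) c)).
    { apply is_derive_Reals. apply is_derive_PSeries. apply binom_in; auto. }
    assert (HdR : derivable_pt_lim (fun t => Rpower (1 + t) (- a)) c (- a * Rpower (1 + c) (- a - 1))).
    { replace (- a * Rpower (1 + c) (- a - 1)) with ((- a * Rpower (1 + c) (- a - 1)) * 1) by ring.
      apply (derivable_pt_lim_comp (fun t => 1 + t) (fun x => Rpower x (- a))).
      - apply is_derive_Reals. auto_derive; auto; ring.
      - apply derivable_pt_lim_power. auto. }
    assert (H := derivable_pt_lim_mult _ _ _ _ _ HdP HdR).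
    unfold mult_fct in H. unfold Q.
    replace 0 with (PSeries (PS_derive b) c * Rpower (1 + c) (- a) +
      PSeries b c * (- a * Rpower (1 + c) (- a - 1))). exact H.
    assert (E1 : Rpower (1 + c) (- a) = (1 + c) * Rpower (1 + c) (- a - 1)).
    { replace (- a) with (1 + (- a - 1)) at 1 by ring. rewrite Rpower_plus, Rpower_1; auto. }
    rewrite E1. assert (HO := binom_ode c Hc).
    transitivity (Rpower (1 + c) (- a - 1) * ((1 + c) * PSeries (PS_derive b) c - a * PSeries b c)).
    ring. rewrite HO. ring. }
  destruct (MVT_cor4 Q (fun _ => 0) 0 (1/2) HQ z) as [c [Hc _]].
  rewrite Rminus_0_r; auto.
  unfold Q in Hc. rewrite PSeries_0, Rplus_0_r, Rpower_1_base in Hc.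
  assert (E : PSeries b z * Rpower (1 + z) (- a) = 1).
  { unfold b in *. rewrite gbinom_0 in Hc. lra. }
  assert (Hz1 : 0 < 1 + z) by (apply Rabs_le_between in Hz; lra).
  assert (E2 : Rpower (1 + z) (- a) * Rpower (1 + z) a = 1).
  { rewrite <- Rpower_plus. replace (- a + a) with 0 by ring. apply Rpower_O. auto. }
  transitivity (PSeries b z * (Rpower (1 + z) (- a) * Rpower (1 + z) a)).
  rewrite E2; ring. rewrite <- Rmult_assoc, E. ring.
Qed.

Lemma binom_series z : Rabs z <= 1/2 ->
  is_series (fun k => gbinom a k * z ^ k) (Rpower (1 + z) a).
Proof.
  intros Hz. rewrite <- binom_value by auto.
  assert (HP := PSeries_correct _ _ (CV_radius_inside _ _ (binom_in z Hz))). apply is_pseries_R in HP.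
  exact HP.
Qed.
End Binom.

Definition aa (j k : nat) : R :=
  match j with
  | O => if (k =? 0)%nat then 1 else 0
  | S _ => if (k <? j)%nat then 0 else
     (-1) ^ (k - j) * INR j * factR (2 * k - j - 1) / (2 ^ (2 * k - j) * factR k * factR (k - j))
  end.

Lemma aa_lt j k : (k < j)%nat -> aa j k = 0.
Proof.
  intros H. destruct j. lia. unfold aa. replace (k <? S j)%nat with true. reflexivity.
  symmetry; apply Nat.ltb_lt; auto.
Qed.

Lemma aa_form j d : aa (S j) (S j + d) =
  (-1) ^ d * INR (S j) * factR (j + 2 * d) / (2 ^ (S j + 2 * d) * factR (S j + d) * factR d).
Proof.
  unfold aa. replace (S j + d <? S j)%nat with false by (symmetry; apply Nat.ltb_ge; lia).
  replace (S j + d - S j)%nat with d by lia.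
  replace (2 * (S j + d) - S j - 1)%nat with (j + 2 * d)%nat by lia.
  replace (2 * (S j + d) - S j)%nat with (S j + 2 * d)%nat by lia. reflexivity.
Qed.

Lemma aa_0 k : aa 0 k = if (k =? 0)%nat then 1 else 0.
Proof. reflexivity. Qed.

Lemma fR n m : n = S m -> factR n = INR n * factR m.
Proof. intros ->. apply factR_S. Qed.

Lemma aa_diag j : aa (S j) (S j) = / 2 ^ (S j).
Proof.
  assert (H := aa_form j 0). rewrite Nat.add_0_r in H. rewrite H.
  replace (j + 2 * 0)%nat with j by lia. rewrite Nat.add_0_r.
  rewrite (fR (S j) j) by lia. replace (factR 0) with 1 by (unfold factR; simpl; ring).
  rewrite pow_O.
  assert (0 < factR j) by apply factR_pos.
  assert (0 < 2 ^ S j) by (apply pow_lt; lra).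
  assert (0 < INR (S j)) by (apply lt_0_INR; lia).
  field. lra.
Qed.

Lemma fR' n m k : n = S m -> k = n -> factR n = INR k * factR m.
Proof. intros -> ->. apply factR_S. Qed.

Lemma aa_rec j k : aa (S (S j)) (S k) = aa j k - 2 * aa (S j) (S k).
Proof.
  destruct j as [|j].
  - destruct k as [|k].
    + rewrite aa_lt by lia. rewrite aa_0. simpl Nat.eqb.
      replace 1%nat with (1 + 0)%nat by lia. rewrite aa_form. unfold factR; simpl. field.
    + rewrite aa_0. simpl Nat.eqb.
      replace (S (S k)) with (2 + k)%nat at 1 by lia. rewrite aa_form.
      replace (S (S k)) with (1 + S k)%nat by lia. rewrite aa_form.
      rewrite (fR (0 + 2 * S k) (1 + 2 * k)) by lia.
      rewrite (fR (1 + S k) (S k)) by lia.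
      rewrite (fR (2 + k) (S k)) by lia.
      rewrite (fR (S k) k) by lia.
      replace (1 + 2 * S k)%nat with (3 + 2 * k)%nat by lia.
      rewrite !pow_add, <- !tech_pow_Rmult.
      assert (0 < factR k) by apply factR_pos.
      assert (0 < factR (1 + 2 * k)) by apply factR_pos.
      assert (0 < 2 ^ (2 * k)) by (apply pow_lt; lra).
      assert (0 <= INR k) by apply pos_INR.
      set (P := 2 ^ (2 * k)) in *. set (Sg := (-1) ^ k). set (F := factR (1 + 2 * k)) in *.
      rewrite ?plus_INR, ?mult_INR, ?S_INR. simpl.
      field. repeat split; lra.
  - destruct (lt_eq_lt_dec k (S j)) as [[Hlt|Heq]|Hgt].
    + rewrite !aa_lt by lia. ring.
    + subst k. rewrite aa_lt by lia. rewrite !aa_diag. simpl pow.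
      assert (0 < 2 ^ j) by (apply pow_lt; lra). field. lra.
    + destruct k as [|k]; [lia|].
      assert (exists d, k = (S j + d)%nat) as [d ->] by (exists (k - S j)%nat; lia).
      replace (S (S (S j + d))) with (S (S (S j)) + d)%nat by lia. rewrite aa_form.
      replace (S (S j + d)) with (S j + S d)%nat by lia. rewrite aa_form.
      replace (S (S (S j)) + d)%nat with (S (S j) + S d)%nat by lia. rewrite aa_form.
      set (F := factR (j + 2 * d + 2)). set (G := factR (j + d + 2)). set (H := factR d).
      set (P := 2 ^ (j + 2 * d)). set (Sg := (-1) ^ d).
      replace (factR (S (S j) + 2 * d)) with F by (unfold F; f_equal; lia).
      replace (factR (j + 2 * S d)) with F by (unfold F; f_equal; lia).
      replace (factR (S j + 2 * S d)) with (INR (j + 2 * d + 3) * F) by (unfold F; symmetry; apply fR'; lia).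
      replace (factR (S j + S d)) with G by (unfold G; f_equal; lia).
      replace (factR (S (S j) + S d)) with (INR (j + d + 3) * G) by (unfold G; symmetry; apply fR'; lia).
      rewrite (fR (S d) d) by lia. fold H.
      replace (2 ^ (S (S (S j)) + 2 * d)) with (8 * P) by (unfold P; replace (S (S (S j)) + 2 * d)%nat with (3 + (j + 2 * d))%nat by lia; rewrite (pow_add 2 3); simpl; ring).
      replace (2 ^ (S j + 2 * S d)) with (8 * P) by (unfold P; replace (S j + 2 * S d)%nat with (3 + (j + 2 * d))%nat by lia; rewrite (pow_add 2 3); simpl; ring).
      replace (2 ^ (S (S j) + 2 * S d)) with (16 * P) by (unfold P; replace (S (S j) + 2 * S d)%nat with (4 + (j + 2 * d))%nat by lia; rewrite (pow_add 2 4); simpl; ring).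
      rewrite <- tech_pow_Rmult. fold Sg.
      assert (0 < F) by apply factR_pos. assert (0 < G) by apply factR_pos.
      assert (0 < H) by apply factR_pos. assert (0 < P) by (apply pow_lt; lra).
      assert (0 <= INR j) by apply pos_INR. assert (0 <= INR d) by apply pos_INR.
      rewrite ?plus_INR, ?mult_INR, ?S_INR. simpl INR.
      field. repeat split; lra.
Qed.


Lemma aa1 k : aa 1 (S k) = gbinom (1/2) (S k).
Proof.
  induction k.
  - rewrite aa_diag, gbinom_S, gbinom_0. simpl. field.
  - rewrite gbinom_S, <- IHk.
    replace (S (S k)) with (1 + S k)%nat by lia. rewrite aa_form.
    replace (S k) with (1 + k)%nat at 2 by lia. rewrite aa_form.
    rewrite (fR' (0 + 2 * (1 + k)) (S (0 + 2 * k)) (2 * k + 2)) by lia.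
    rewrite (fR' (S (0 + 2 * k)) (0 + 2 * k) (2 * k + 1)) by lia.
    change (factR (1 + k)) with (factR (S k)).
    rewrite (fR' (1 + S k) (S k) (k + 2)) by lia.
    rewrite (fR (S k) k) by lia.
    replace (1 + 2 * S k)%nat with (2 + (1 + 2 * k))%nat by lia. rewrite (pow_add 2 2).
    rewrite <- tech_pow_Rmult.
    set (F := factR (0 + 2 * k)). set (H := factR k).
    set (P := 2 ^ (1 + 2 * k)). set (Sg := (-1) ^ k).
    assert (0 < F) by apply factR_pos.
    assert (0 < H) by apply factR_pos. assert (0 < P) by (apply pow_lt; lra).
    assert (0 <= INR k) by apply pos_INR.
    rewrite ?plus_INR, ?mult_INR, ?S_INR. simpl INR. simpl pow.
    field. repeat split; lra.
Qed.

Lemma sum_ge_term (f : nat -> R) n i : (forall k, 0 <= f k) -> (i <= n)%nat -> f i <= sum_f_R0 f n.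
Proof.
  intros Hp Hi. induction n.
  - assert (i = 0%nat) by lia. subst. simpl. lra.
  - destruct (Nat.eq_dec i (S n)) as [->|Hne].
    + simpl. assert (0 <= sum_f_R0 f n) by (apply cond_pos_sum; auto). lra.
    + simpl. specialize (IHn ltac:(lia)). specialize (Hp (S n)). lra.
Qed.

Lemma fact_binom_le a b : factR (a + b) <= 2 ^ (a + b) * factR a * factR b.
Proof.
  assert (H := binomial 1 1 (a + b)).
  assert (Hc : Binomial.C (a + b) a <= 2 ^ (a + b)).
  { replace 2 with (1 + 1) by ring. rewrite H.
    apply Rle_trans with (Binomial.C (a + b) a * 1 ^ a * 1 ^ (a + b - a)).
    rewrite !pow1; lra.
    apply (sum_ge_term (fun i => Binomial.C (a + b) i * 1 ^ i * 1 ^ (a + b - i))).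
    - intros k. rewrite !pow1. rewrite !Rmult_1_r. unfold Binomial.C.
      apply Rmult_le_pos. apply pos_INR. left; apply Rinv_0_lt_compat, Rmult_lt_0_compat; apply INR_fact_lt_0.
    - lia. }
  unfold Binomial.C in Hc. replace (a + b - a)%nat with b in Hc by lia.
  fold (factR (a + b)) (factR a) (factR b) in Hc.
  assert (0 < factR a) by apply factR_pos. assert (0 < factR b) by apply factR_pos.
  unfold Rdiv in Hc. apply Rmult_le_compat_r with (r := factR a * factR b) in Hc; [|nra].
  rewrite Rmult_assoc, Rinv_l in Hc by nra. lra.
Qed.

Lemma aa_bound j k : Rabs (aa j k) <= 1.
Proof.
  destruct j as [|j].
  - rewrite aa_0. destruct (k =? 0)%nat; rewrite ?Rabs_R1, ?Rabs_R0; lra.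
  - destruct (lt_dec k (S j)). rewrite aa_lt by lia. rewrite Rabs_R0; lra.
    assert (exists d, k = (S j + d)%nat) as [d ->] by (exists (k - S j)%nat; lia).
    rewrite aa_form.
    assert (Hf := fact_binom_le (j + d) d). replace (j + d + d)%nat with (j + 2 * d)%nat in Hf by lia.
    replace (j + d + d)%nat with (j + 2 * d)%nat in Hf by lia.
    assert (0 < factR j) by apply factR_pos. assert (0 < factR d) by apply factR_pos.
    assert (0 < factR (j + d)) by apply factR_pos.
    assert (0 < factR (j + 2 * d)) by apply factR_pos.
    assert (Hg : INR (S j) * factR (j + d) <= factR (S j + d)).
    { rewrite (fR' (S j + d) (j + d) (S j + d)) by lia. apply Rmult_le_compat_r. lra. apply le_INR. lia. }
    assert (HS : 0 < INR (S j)) by (apply lt_0_INR; lia).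
    assert (HP : 0 < 2 ^ (j + 2 * d)) by (apply pow_lt; lra).
    replace (2 ^ (S j + 2 * d)) with (2 * 2 ^ (j + 2 * d)) by (replace (S j + 2 * d)%nat with (S (j + 2 * d)) by lia; reflexivity).
    set (P := 2 ^ (j + 2 * d)) in *.
    assert (Hden : 0 < 2 * P * factR (S j + d) * factR d).
    { assert (0 < factR (S j + d)) by apply factR_pos. repeat apply Rmult_lt_0_compat; lra. }
    unfold Rdiv. rewrite Rabs_mult, Rabs_inv, (Rabs_right (2 * P * _ * _)) by lra.
    rewrite !Rabs_mult, pow_1_abs, Rmult_1_l, (Rabs_right (INR (S j))), (Rabs_right (factR (j + 2 * d))) by lra.
    apply Rmult_le_reg_r with (2 * P * factR (S j + d) * factR d); auto.
    rewrite Rmult_assoc, Rinv_l, Rmult_1_r, Rmult_1_l by lra.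
    apply Rle_trans with (INR (S j) * (P * factR (j + d) * factR d)).
    apply Rmult_le_compat_l; lra.
    apply Rle_trans with (P * factR (S j + d) * factR d).
    replace (INR (S j) * (P * factR (j + d) * factR d)) with (P * (INR (S j) * factR (j + d)) * factR d) by ring.
    apply Rmult_le_compat_r; [lra|]. apply Rmult_le_compat_l; lra.
    assert (0 < factR (S j + d)) by apply factR_pos. nra.
Qed.



Lemma decr1 (a : nat -> R) (l : R) : a 0%nat = 0 -> is_series (fun k => a (S k)) l -> is_series a l.
Proof.
  intros H0 H. apply is_series_decr_1. change (is_series (fun k => a (S k)) (l + - a 0%nat)).
  rewrite H0, Ropp_0, Rplus_0_r. exact H.
Qed.

Lemma delta_series : is_series (fun k : nat => if (k =? 0)%nat then 1 else 0) 1.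
Proof.
  assert (H := is_series_finite (fun k : nat => if (k =? 0)%nat then 1 else 0) 0).
  simpl in H. apply H. intros k Hk. destruct k. lia. reflexivity.
Qed.

Lemma upow_series z : 0 <= z <= 1/4 -> forall j,
  is_series (fun k => aa j k * z ^ k) ((sqrt (1 + z) - 1) ^ j).
Proof.
  intros Hz.
  assert (Hboth : forall j, is_series (fun k => aa j k * z ^ k) ((sqrt (1 + z) - 1) ^ j) /\
                            is_series (fun k => aa (S j) k * z ^ k) ((sqrt (1 + z) - 1) ^ (S j))).
  { induction j.
    - split.
      + apply isx with (2 := delta_series). intros k. rewrite aa_0. destruct k; simpl; ring.
      + assert (Hb := binom_series (1/2) ltac:(rewrite Rabs_right; lra) z ltac:(rewrite Rabs_right; lra)).
        replace (Rpower (1 + z) (1/2)) with (sqrt (1 + z)) in Hb.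
        2:{ replace (1/2) with (/2) by field. rewrite Rpower_sqrt; auto; lra. }
        assert (H := ism _ _ _ _ Hb delta_series).
        rewrite pow_1. apply isx with (2 := H).
        intros k. destruct k. rewrite aa_lt by lia. rewrite gbinom_0. simpl. ring.
        rewrite aa1. simpl. ring.
    - destruct IHj as [H0 H1]. split; auto.
      apply decr1. cbv beta. rewrite (aa_lt (S (S j)) 0) by lia. ring.
      assert (Hs := is_series_shift1 (fun k => aa (S j) k * z ^ k) _ ltac:(cbv beta; rewrite (aa_lt (S j) 0) by lia; ring) H1).
      assert (H := ism _ _ _ _ (iss z _ _ H0) (iss 2 _ _ Hs)).
      replace ((sqrt (1 + z) - 1) ^ S (S j)) with (z * (sqrt (1 + z) - 1) ^ j - 2 * (sqrt (1 + z) - 1) ^ S j).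
      apply isx with (2 := H). intros k. rewrite aa_rec. simpl. ring.
      assert (Hsq : sqrt (1 + z) * sqrt (1 + z) = 1 + z) by (apply sqrt_sqrt; lra).
      simpl. nra. }
  intros j. apply Hboth.
Qed.

Lemma sumR_sf a l f : sumR a (S l) f = sum_f_R0 (fun i => f (a + i)%nat) l.
Proof.
  revert a. induction l; intros a.
  - simpl. rewrite Nat.add_0_r. ring.
  - change (sumR a (S (S l)) f) with (f a + sumR (S a) (S l) f). rewrite IHl.
    rewrite (decomp_sum (fun i => f (a + i)%nat) (S l)) by lia. simpl pred.
    rewrite Nat.add_0_r. f_equal. apply sum_eq. intros i _. f_equal. lia.
Qed.

Lemma sum_range_0 m f : sum_range 0 m f = sum_f_R0 f m.
Proof. unfold sum_range. rewrite Nat.sub_0_r, sumR_sf. reflexivity. Qed.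

Lemma sum_range_1 m f : sum_range 1 (S m) f = sum_f_R0 (fun i => f (S i)) m.
Proof. unfold sum_range. replace (S (S m) - 1)%nat with (S m) by lia. rewrite sumR_sf. reflexivity. Qed.

Lemma sgn_lemma m v d : m = (v + d)%nat -> (-1) ^ m * (-1) ^ v = (-1) ^ d.
Proof.
  intros ->. rewrite pow_add. replace ((-1) ^ v * (-1) ^ d * (-1) ^ v) with (((-1) ^ v * (-1) ^ v) * (-1) ^ d) by ring.
  rewrite <- pow_add. replace (v + v)%nat with (2 * v)%nat by lia. rewrite pow_mult.
  replace ((-1) ^ 2) with 1 by ring. rewrite pow1. ring.
Qed.

Lemma neg_pow (a : R) k : (- a) ^ k = (-1) ^ k * a ^ k.
Proof. rewrite <- Rpow_mult_distr. f_equal. ring. Qed.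

Lemma sg_sq m : (-1) ^ m * (-1) ^ m = 1.
Proof.
  rewrite <- pow_add. replace (m + m)%nat with (2 * m)%nat by lia. rewrite pow_mult.
  replace ((-1) ^ 2) with 1 by ring. apply pow1.
Qed.

Lemma inv_neg4 m : / (-4) ^ m = (-1) ^ m / 4 ^ m.
Proof.
  replace (-4) with (-1 * 4) by ring. rewrite Rpow_mult_distr.
  assert (H := sg_sq m).
  assert (0 < 4 ^ m) by (apply pow_lt; lra).
  assert ((-1) ^ m <> 0) by (intro H1; rewrite H1 in H; lra).
  rewrite Rinv_mult. unfold Rdiv. f_equal.
  apply Rmult_eq_reg_l with ((-1) ^ m); auto. rewrite Rinv_r; auto.
Qed.

Lemma e1_S s m : e1 s (S m) = INR s ^ S m * factR (2 * S m - 1) / (-4) ^ S m *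
    sum_range 1 (S m) (fun nu => (- 4 * PI ^ 2 * INR s / 3) ^ nu /
        (factR (2 * nu - 1) * factR (nu + S m) * factR (S m - nu))).
Proof. reflexivity. Qed.

Lemma pow2_4 k : 2 ^ (2 * k) = 4 ^ k.
Proof. rewrite pow_mult. f_equal. ring. Qed.

Lemma e1_id s th : th ^ 2 = 4 * PI ^ 2 * INR s / 3 -> forall m,
  e1 s m = INR s ^ m * sum_f_R0 (fun v => th ^ (2 * v) / factR (2 * v) * aa (2 * v) (m + v)) m.
Proof.
  intros Hth [|m].
  - simpl. unfold factR. simpl. field.
  - rewrite e1_S, sum_range_1.
    rewrite (decomp_sum _ (S m)) by lia. simpl pred.
    replace (aa (2 * 0) (S m + 0)) with 0 by reflexivity.
    rewrite Rmult_0_r, Rplus_0_l.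
    rewrite !scal_sum.
    apply sum_eq. intros i Hi.
    assert (exists d, m = (i + d)%nat) as [d ->] by (exists (m - i)%nat; lia).
    replace (2 * S i)%nat with (S (2 * i + 1)) by lia.
    replace (S (i + d) + S i)%nat with (S (2 * i + 1) + d)%nat by lia.
    rewrite aa_form.
    replace (2 * S (i + d) - 1)%nat with (2 * i + 1 + 2 * d)%nat by lia.
    replace (S (2 * i + 1) - 1)%nat with (2 * i + 1)%nat by lia.
    replace (S i + S (i + d))%nat with (S (2 * i + 1) + d)%nat by lia.
    replace (S (i + d) - S i)%nat with d by lia.
    replace (S (2 * i + 1) + 2 * d)%nat with (2 * S (i + d))%nat by lia.
    rewrite pow2_4.
    rewrite (fR' (S (2 * i + 1)) (2 * i + 1) (S (2 * i + 1))) by lia.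
    replace (S (2 * i + 1)) with (2 * S i)%nat by lia. rewrite pow_mult, Hth.
    replace (- 4 * PI ^ 2 * INR s / 3) with (- (4 * PI ^ 2 * INR s / 3)) by field.
    rewrite neg_pow.
    rewrite <- (sgn_lemma (S (i + d)) (S i) d) by lia.
    unfold Rdiv. rewrite inv_neg4.
    assert (0 < factR (2 * i + 1)) by apply factR_pos.
    assert (0 < factR (2 * i + 1 + 2 * d)) by apply factR_pos.
    assert (0 < factR (2 * S i + d)) by apply factR_pos.
    assert (0 < factR d) by apply factR_pos.
    assert (0 < 4 ^ S (i + d)) by (apply pow_lt; lra).
    assert (0 < INR (2 * S i)) by (apply lt_0_INR; lia).
    field. repeat split; lra.
Qed.

Lemma o1_id s th : th ^ 2 = 4 * PI ^ 2 * INR s / 3 ->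
  th = 2 * PI * INR s / (sqrt 3 * sqrt (INR s)) -> 0 < INR s -> forall m,
  o1 s m = sqrt (INR s) * INR s ^ m *
    sum_f_R0 (fun v => th ^ (2 * v + 1) / factR (2 * v + 1) * aa (2 * v + 1) (m + v + 1)) m.
Proof.
  intros Hth2 Hth1 Hs m. unfold o1. rewrite sum_range_0.
  rewrite !scal_sum. apply sum_eq. intros i Hi.
  assert (exists d, m = (i + d)%nat) as [d ->] by (exists (m - i)%nat; lia).
  replace (2 * i + 1)%nat with (S (2 * i)) by lia.
  replace (i + d + i + 1)%nat with (S (2 * i) + d)%nat by lia.
  rewrite aa_form.
  replace (2 * i + 2 * d)%nat with (2 * (i + d))%nat by lia.
  replace (S (2 * i) + 2 * d)%nat with (S (2 * (i + d)))%nat by lia.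
  replace (i + d - i)%nat with d by lia.
  replace (i + (i + d) + 1)%nat with (S (2 * i) + d)%nat by lia.
  change (2 ^ S (2 * (i + d))) with (2 * 2 ^ (2 * (i + d))). rewrite pow2_4.
  change (th ^ S (2 * i)) with (th * th ^ (2 * i)). rewrite (pow_mult th 2 i), Hth2.
  rewrite (fR (S (2 * i)) (2 * i)) by lia.
  rewrite Hth1.
  replace (- 4 * PI ^ 2 * INR s / 3) with (- (4 * PI ^ 2 * INR s / 3)) by field.
  rewrite neg_pow.
  rewrite <- (sgn_lemma (i + d) i d) by lia.
  unfold Rdiv. rewrite (Rinv_mult (sqrt 3)), inv_neg4.
  assert (0 < factR (2 * i)) by apply factR_pos.
  assert (0 < factR (2 * (i + d))) by apply factR_pos.
  assert (0 < factR (S (2 * i) + d)) by apply factR_pos.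
  assert (0 < factR d) by apply factR_pos.
  assert (0 < 4 ^ (i + d)) by (apply pow_lt; lra).
  assert (0 < INR (S (2 * i))) by (apply lt_0_INR; lia).
  assert (0 < sqrt 3) by (apply sqrt_lt_R0; lra).
  assert (0 < sqrt (INR s)) by (apply sqrt_lt_R0; lra).
  rewrite (pow_add (INR s) (i + d) 1), pow_1. set (a1 := (-1) ^ i). set (a2 := (-1) ^ (i + d)).
  field. repeat split; lra.
Qed.

Lemma sf_extend (g : nat -> R) M T : (forall v, (M < v)%nat -> g v = 0) -> (M <= T)%nat ->
  sum_f_R0 g M = sum_f_R0 g T.
Proof.
  intros H HMT. induction T.
  - assert (M = 0%nat) by lia. subst; reflexivity.
  - destruct (Nat.eq_dec M (S T)) as [->|Hne]. reflexivity.
    simpl. rewrite <- IHT by lia. rewrite H by lia. ring.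
Qed.

Lemma sf_swap (g : nat -> nat -> R) T T' :
  sum_f_R0 (fun M => sum_f_R0 (fun v => g v M) T) T' = sum_f_R0 (fun v => sum_f_R0 (fun M => g v M) T') T.
Proof.
  induction T'.
  - simpl. reflexivity.
  - simpl. rewrite IHT'. rewrite <- sum_plus. reflexivity.
Qed.

Lemma dbl_series (t : nat -> nat -> R) (F A : nat -> R) (Ss SA q : R) :
  (forall v, is_series (t v) (F v)) -> is_series F Ss ->
  (forall v M, Rabs (t v M) <= A v * q ^ M) -> is_series A SA ->
  (forall v M, (M < v)%nat -> t v M = 0) -> 0 <= q < 1 ->
  forall T, Rabs (Ss - sum_f_R0 (fun M => sum_f_R0 (fun v => t v M) M) T) <= SA * (q ^ (S T) / (1 - q)).
Proof.
  intros Ht HF Hb HA H0 Hq T.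
  set (P := fun v => sum_f_R0 (t v) T).
  assert (E1 : sum_f_R0 (fun M => sum_f_R0 (fun v => t v M) M) T = sum_f_R0 P T).
  { rewrite (sum_eq _ (fun M => sum_f_R0 (fun v => t v M) T)).
    - rewrite sf_swap. reflexivity.
    - intros M HM. apply sf_extend; auto. }
  assert (HP : is_series P (sum_f_R0 P T)).
  { apply is_series_finite. intros k Hk. unfold P. rewrite (sum_eq _ (fun _ => 0)).
    rewrite sum_cte. ring. intros M HM. apply H0. lia. }
  rewrite E1.
  apply (series_abs_le (fun v => F v - P v) (fun v => A v * (q ^ (S T) / (1 - q)))).
  - apply ism; auto.
  - apply is_series_scal_r. auto.
  - intros v. unfold P. replace (A v * (q ^ S T / (1 - q))) with (A v * q ^ S T / (1 - q)) by (unfold Rdiv; ring).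
    apply tail_bound; auto.
Qed.

Lemma inner_bound (t : nat -> nat -> R) (A : nat -> R) (SA q : R) M :
  (forall v M, Rabs (t v M) <= A v * q ^ M) -> is_series A SA -> (forall v, 0 <= A v) -> 0 <= q ->
  Rabs (sum_f_R0 (fun v => t v M) M) <= SA * q ^ M.
Proof.
  intros Hb HA Hp Hq.
  eapply Rle_trans. apply Rsum_abs.
  eapply Rle_trans. apply (sum_Rle _ (fun v => A v * q ^ M)). intros; apply Hb.
  rewrite <- scal_sum, Rmult_comm. apply Rmult_le_compat_r. apply pow_le; auto.
  apply psum_le; auto.
Qed.

Lemma triangle (g : nat -> nat -> R) T :
  sum_f_R0 (fun L => sum_f_R0 (fun k => g k (L - k)%nat) L) T =
  sum_f_R0 (fun k => sum_f_R0 (fun i => g k i) (T - k)) T.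
Proof.
  induction T.
  - simpl. reflexivity.
  - rewrite tech5, IHT. rewrite (tech5 (fun k => sum_f_R0 (fun i => g k i) (S T - k)) T).
    rewrite (tech5 (fun k => g k (S T - k)%nat) T).
    replace (S T - S T)%nat with 0%nat by lia. simpl (sum_f_R0 (fun i => g (S T) i) 0).
    rewrite (sum_eq (fun k => sum_f_R0 (fun i => g k i) (S T - k)) (fun k => sum_f_R0 (fun i => g k i) (T - k) + g k (S T - k)%nat)).
    rewrite sum_plus. ring.
    intros k Hk. replace (S T - k)%nat with (S (T - k)) by lia. simpl. reflexivity.
Qed.

Lemma product_err (G K : R) (a b : nat -> R) (Ea Ka Eb q r : R) T :
  (forall t, Rabs (G - sum_f_R0 a t) <= Ea * q ^ (S t)) ->
  (forall k, Rabs (a k) <= Ka * q ^ k) ->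
  (forall t, Rabs (K - sum_f_R0 b t) <= Eb * r ^ (S t)) ->
  Rabs K <= 1 ->
  Rabs (G * K - sum_f_R0 (fun L => sum_f_R0 (fun k => a k * b (L - k)%nat) L) T)
    <= Ea * q ^ (S T) + sum_f_R0 (fun k => Ka * q ^ k * (Eb * r ^ (S (T - k)))) T.
Proof.
  intros HG Ha HK HK1.
  rewrite (triangle (fun k i => a k * b i)).
  assert (E : G * K - sum_f_R0 (fun k => sum_f_R0 (fun i => a k * b i) (T - k)) T =
     (G - sum_f_R0 a T) * K + sum_f_R0 (fun k => a k * (K - sum_f_R0 b (T - k))) T).
  { rewrite (sum_eq (fun k => a k * (K - sum_f_R0 b (T - k))) (fun k => a k * K - sum_f_R0 (fun i => a k * b i) (T - k))).
    rewrite minus_sum. rewrite <- scal_sum. ring.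
    intros k _. rewrite Rmult_minus_distr_l, scal_sum. f_equal. apply sum_eq. intros; ring. }
  rewrite E. eapply Rle_trans. apply Rabs_triang. apply Rplus_le_compat.
  - rewrite Rabs_mult. replace (Ea * q ^ S T) with (Ea * q ^ S T * 1) by ring.
    apply Rmult_le_compat; auto using Rabs_pos.
  - eapply Rle_trans. apply Rsum_abs. apply sum_Rle. intros k _.
    rewrite Rabs_mult. apply Rmult_le_compat; auto using Rabs_pos.
Qed.

Section Main.
Variables s n : nat.
Hypothesis Hs : (1 <= s)%nat.
Hypothesis Hn : 0 < INR n.
Hypothesis Hq : INR s / INR n <= 1/4.

Definition qq := INR s / INR n.
Definition pp := sqrt qq.
Definition th := 2 * PI * sqrt (INR s / 3).
Definition uu := sqrt (1 + qq) - 1.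
Definition ww := th * uu / pp.

Lemma sR_pos : 0 < INR s.
Proof. apply lt_0_INR. lia. Qed.
Lemma qq_pos : 0 < qq.
Proof. unfold qq. apply Rdiv_lt_0_compat; auto. apply sR_pos. Qed.
Lemma qq_le : qq <= 1/4.
Proof. exact Hq. Qed.
Lemma pp_pos : 0 < pp.
Proof. apply sqrt_lt_R0, qq_pos. Qed.
Lemma pp_sq : pp ^ 2 = qq.
Proof. unfold pp. simpl. rewrite Rmult_1_r. apply sqrt_sqrt. left; apply qq_pos. Qed.
Lemma pp_even k : pp ^ (2 * k) = qq ^ k.
Proof. rewrite pow_mult, pp_sq. reflexivity. Qed.
Lemma th_nonneg : 0 <= th.
Proof. unfold th. assert (0 < PI) by apply PI_RGT_0. assert (0 <= sqrt (INR s / 3)) by apply sqrt_pos. nra. Qed.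
Lemma th_sq : th ^ 2 = 4 * PI ^ 2 * INR s / 3.
Proof.
  unfold th. assert (0 < INR s) by apply sR_pos.
  rewrite Rpow_mult_distr, pow2_sqrt by lra. field.
Qed.
Lemma th_eq : th = 2 * PI * INR s / (sqrt 3 * sqrt (INR s)).
Proof.
  unfold th. assert (0 < INR s) by apply sR_pos.
  assert (0 < sqrt 3) by (apply sqrt_lt_R0; lra).
  assert (0 < sqrt (INR s)) by (apply sqrt_lt_R0; lra).
  rewrite sqrt_div_alt by lra.
  replace (INR s) with (sqrt (INR s) * sqrt (INR s)) at 2 by (apply sqrt_sqrt; lra).
  field. lra.
Qed.

Definition te v M := th ^ (2 * v) / factR (2 * v) * aa (2 * v) (M + v) * qq ^ M.
Definition to v M := th ^ (2 * v + 1) / factR (2 * v + 1) * aa (2 * v + 1) (M + v + 1) * pp * qq ^ M.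

Lemma te_series v : is_series (te v) (ww ^ (2 * v) / factR (2 * v)).
Proof.
  assert (H := upow_series qq ltac:(split; [left; apply qq_pos| apply qq_le]) (2 * v)).
  apply (is_series_shift v) in H.
  2:{ intros k Hk. rewrite aa_lt by lia. ring. }
  apply (iss (th ^ (2 * v) / factR (2 * v) / qq ^ v)) in H.
  assert (0 < qq ^ v) by (apply pow_lt, qq_pos).
  assert (0 < factR (2 * v)) by apply factR_pos.
  replace (ww ^ (2 * v) / factR (2 * v)) with (th ^ (2 * v) / factR (2 * v) / qq ^ v * uu ^ (2 * v)).
  apply isx with (2 := H). intros M. unfold te. rewrite pow_add, Nat.add_comm. field. lra.
  unfold ww. unfold Rdiv. rewrite !Rpow_mult_distr, pow_inv, pp_even. field. lra.
Qed.

Lemma to_series v : is_series (to v) (ww ^ (2 * v + 1) / factR (2 * v + 1)).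
Proof.
  assert (H := upow_series qq ltac:(split; [left; apply qq_pos| apply qq_le]) (2 * v + 1)).
  apply (is_series_shift (v + 1)) in H.
  2:{ intros k Hk. rewrite aa_lt by lia. ring. }
  apply (iss (th ^ (2 * v + 1) / factR (2 * v + 1) / pp ^ (2 * v + 1))) in H.
  assert (0 < pp) by apply pp_pos.
  assert (0 < pp ^ (2 * v + 1)) by (apply pow_lt; auto).
  assert (0 < factR (2 * v + 1)) by apply factR_pos.
  replace (ww ^ (2 * v + 1) / factR (2 * v + 1)) with (th ^ (2 * v + 1) / factR (2 * v + 1) / pp ^ (2 * v + 1) * uu ^ (2 * v + 1)).
  apply isx with (2 := H). intros M. unfold to.
  replace (M + v + 1)%nat with (v + 1 + M)%nat by lia.
  rewrite (pow_add qq (v + 1) M). rewrite <- (pp_even (v + 1)).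
  replace (2 * (v + 1))%nat with (2 * v + 1 + 1)%nat by lia. rewrite (pow_add pp (2 * v + 1) 1).
  field. lra.
  unfold ww. unfold Rdiv. rewrite !Rpow_mult_distr, pow_inv. field. lra.
Qed.

Lemma te_bound v M : Rabs (te v M) <= th ^ (2 * v) / factR (2 * v) * qq ^ M.
Proof.
  unfold te. assert (0 < factR (2 * v)) by apply factR_pos.
  assert (0 <= th ^ (2 * v)) by (apply pow_le, th_nonneg).
  assert (0 < qq ^ M) by (apply pow_lt, qq_pos).
  rewrite !Rabs_mult. rewrite (Rabs_right (qq ^ M)) by lra.
  rewrite (Rabs_right (th ^ (2 * v) / factR (2 * v))).
  2:{ apply Rle_ge. apply Rdiv_le_0_compat; lra. }
  assert (Ha := aa_bound (2 * v) (M + v)).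
  assert (0 <= th ^ (2 * v) / factR (2 * v)) by (apply Rdiv_le_0_compat; lra).
  apply Rmult_le_compat_r; [lra|]. rewrite <- Rmult_1_r. apply Rmult_le_compat_l; lra.
Qed.

Lemma to_bound v M : Rabs (to v M) <= th ^ (2 * v + 1) / factR (2 * v + 1) * pp * qq ^ M.
Proof.
  unfold to. assert (0 < factR (2 * v + 1)) by apply factR_pos.
  assert (0 <= th ^ (2 * v + 1)) by (apply pow_le, th_nonneg).
  assert (0 < qq ^ M) by (apply pow_lt, qq_pos).
  assert (0 < pp) by apply pp_pos.
  rewrite !Rabs_mult. rewrite (Rabs_right (qq ^ M)) by lra. rewrite (Rabs_right pp) by lra.
  rewrite (Rabs_right (th ^ (2 * v + 1) / factR (2 * v + 1))).
  2:{ apply Rle_ge. apply Rdiv_le_0_compat; lra. }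
  assert (Ha := aa_bound (2 * v + 1) (M + v + 1)).
  assert (0 <= th ^ (2 * v + 1) / factR (2 * v + 1)) by (apply Rdiv_le_0_compat; lra).
  apply Rmult_le_compat_r; [lra|]. apply Rmult_le_compat_r; [lra|].
  rewrite <- Rmult_1_r. apply Rmult_le_compat_l; lra.
Qed.

Lemma te_sum M : sum_f_R0 (fun v => te v M) M = e1 s M * (/ INR n) ^ M.
Proof.
  rewrite (e1_id s th th_sq M). unfold te.
  rewrite (Rmult_comm (INR s ^ M)), Rmult_assoc, <- Rpow_mult_distr.
  rewrite (Rmult_comm (sum_f_R0 _ M)), scal_sum. reflexivity.
Qed.

Lemma to_sum M : sum_f_R0 (fun v => to v M) M = o1 s M * (/ INR n) ^ M / sqrt (INR n).
Proof.
  assert (0 < INR s) by apply sR_pos.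
  rewrite (o1_id s th th_sq th_eq H M). unfold to.
  assert (E : sqrt (INR s) * INR s ^ M * (/ INR n) ^ M / sqrt (INR n) = pp * qq ^ M).
  { unfold pp, qq. rewrite sqrt_div_alt by lra. unfold Rdiv. rewrite Rpow_mult_distr. ring. }
  transitivity (sum_f_R0 (fun v => th ^ (2 * v + 1) / factR (2 * v + 1) * aa (2 * v + 1) (M + v + 1)) M * (pp * qq ^ M)).
  rewrite (Rmult_comm (sum_f_R0 _ M)), scal_sum. apply sum_eq. intros; ring.
  rewrite <- E. assert (0 < sqrt (INR n)) by (apply sqrt_lt_R0; auto). field. lra.
Qed.

Lemma even_approx T : Rabs (cosh ww - sum_f_R0 (fun M => e1 s M * (/ INR n) ^ M) T) <= cosh th * (qq ^ (S T) / (1 - qq)).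
Proof.
  rewrite <- (sum_eq (fun M => sum_f_R0 (fun v => te v M) M)) by (intros; apply te_sum).
  apply (dbl_series te (fun v => ww ^ (2 * v) / factR (2 * v)) (fun v => th ^ (2 * v) / factR (2 * v))).
  - apply te_series.
  - apply cosh_series.
  - apply te_bound.
  - apply cosh_series.
  - intros v M HM. unfold te. rewrite aa_lt by lia. ring.
  - split. left; apply qq_pos. assert (H := qq_le). lra.
Qed.

Lemma even_coef M : Rabs (e1 s M * (/ INR n) ^ M) <= cosh th * qq ^ M.
Proof.
  rewrite <- te_sum. apply (inner_bound te (fun v => th ^ (2 * v) / factR (2 * v))).
  - apply te_bound.
  - apply cosh_series.
  - intros v. apply Rdiv_le_0_compat. apply pow_le, th_nonneg. apply factR_pos.
  - left; apply qq_pos.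
Qed.

Lemma odd_approx T : Rabs (sinh ww - sum_f_R0 (fun M => o1 s M * (/ INR n) ^ M / sqrt (INR n)) T) <= sinh th * pp * (qq ^ (S T) / (1 - qq)).
Proof.
  rewrite <- (sum_eq (fun M => sum_f_R0 (fun v => to v M) M)) by (intros; apply to_sum).
  apply (dbl_series to (fun v => ww ^ (2 * v + 1) / factR (2 * v + 1)) (fun v => th ^ (2 * v + 1) / factR (2 * v + 1) * pp)).
  - apply to_series.
  - apply sinh_series.
  - apply to_bound.
  - apply is_series_scal_r. apply sinh_series.
  - intros v M HM. unfold to. rewrite aa_lt by lia. ring.
  - split. left; apply qq_pos. assert (H := qq_le). lra.
Qed.

Lemma odd_coef M : Rabs (o1 s M * (/ INR n) ^ M / sqrt (INR n)) <= sinh th * pp * qq ^ M.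
Proof.
  rewrite <- to_sum. apply (inner_bound to (fun v => th ^ (2 * v + 1) / factR (2 * v + 1) * pp)).
  - apply to_bound.
  - apply is_series_scal_r. apply sinh_series.
  - intros v. apply Rmult_le_pos. apply Rdiv_le_0_compat. apply pow_le, th_nonneg. apply factR_pos. left; apply pp_pos.
  - left; apply qq_pos.
Qed.

Definition KK := Rpower (1 + qq) (-5/4).
Definition rr := 5 * qq / 4.

Lemma KK_abs : Rabs KK <= 1.
Proof.
  unfold KK. assert (0 < qq) by apply qq_pos.
  assert (0 < Rpower (1 + qq) (-5/4)) by apply exp_pos.
  rewrite Rabs_right by lra.
  replace (-5/4) with (- (5/4)) by field. rewrite Rpower_Ropp.
  assert (Hl : 0 < ln (1 + qq)) by (rewrite <- ln_1; apply ln_increasing; lra).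
  assert (H1 : 1 <= Rpower (1 + qq) (5/4)).
  { unfold Rpower. assert (H2 := exp_ineq1_le (5/4 * ln (1 + qq))). lra. }
  apply Rmult_le_reg_l with (Rpower (1 + qq) (5/4)). lra. rewrite Rinv_r by lra. lra.
Qed.

Lemma rr_bounds : 0 < rr <= 5/16.
Proof. unfold rr. assert (H := qq_pos). assert (H' := qq_le). lra. Qed.

Lemma K_approx T : Rabs (KK - sum_f_R0 (fun i => e2 s i * (/ INR n) ^ i) T) <= / (1 - rr) * rr ^ (S T).
Proof.
  assert (H := binom_series (-5/4) ltac:(rewrite Rabs_left; lra) qq
     ltac:(assert (H0 := qq_pos); assert (H1 := qq_le); rewrite Rabs_right; lra)).
  assert (Hr := rr_bounds).
  rewrite (sum_eq _ (fun i => gbinom (-5/4) i * qq ^ i)).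
  replace (/ (1 - rr) * rr ^ S T) with (1 * rr ^ S T / (1 - rr)) by (field; lra).
  apply tail_bound; auto. lra.
  intros k. rewrite Rmult_1_l. unfold rr. rewrite Rabs_mult.
  replace (5 * qq / 4) with (5/4 * qq) by field. rewrite Rpow_mult_distr.
  assert (0 < qq ^ k) by (apply pow_lt, qq_pos). rewrite (Rabs_right (qq ^ k)) by lra.
  apply Rmult_le_compat_r. lra. apply gbinom_bound. rewrite Rabs_left; lra.
  intros i _. unfold e2, qq. unfold Rdiv. rewrite Rpow_mult_distr. ring.
Qed.

Lemma even_err T : Rabs (cosh ww * KK - sum_f_R0 (fun L => e3 s L * (/ INR n) ^ L) T) <=
  cosh th / (1 - qq) * qq ^ (S T) + sum_f_R0 (fun k => cosh th * qq ^ k * (/ (1 - rr) * rr ^ (S (T - k)))) T.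
Proof.
  replace (sum_f_R0 (fun L => e3 s L * (/ INR n) ^ L) T) with
    (sum_f_R0 (fun L => sum_f_R0 (fun k => (e1 s k * (/ INR n) ^ k) * (e2 s (L - k) * (/ INR n) ^ (L - k))) L) T).
  - apply (product_err (cosh ww) KK (fun k => e1 s k * (/ INR n) ^ k) (fun i => e2 s i * (/ INR n) ^ i) (cosh th / (1 - qq)) (cosh th) (/ (1 - rr)) qq rr T).
    + intros t. replace (cosh th / (1 - qq) * qq ^ S t) with (cosh th * (qq ^ S t / (1 - qq))) by (unfold Rdiv; ring).
      apply even_approx.
    + apply even_coef.
    + apply K_approx.
    + apply KK_abs.
  - apply sum_eq. intros L _. unfold e3. rewrite sum_range_0.
    rewrite Rmult_comm, scal_sum. apply sum_eq. intros k Hk.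
    replace ((/ INR n) ^ L) with ((/ INR n) ^ k * (/ INR n) ^ (L - k)). ring.
    rewrite <- pow_add. f_equal. lia.
Qed.

Lemma odd_err T : Rabs (sinh ww * KK - sum_f_R0 (fun L => o3 s L * (/ INR n) ^ L / sqrt (INR n)) T) <=
  sinh th * pp / (1 - qq) * qq ^ (S T) + sum_f_R0 (fun k => sinh th * pp * qq ^ k * (/ (1 - rr) * rr ^ (S (T - k)))) T.
Proof.
  replace (sum_f_R0 (fun L => o3 s L * (/ INR n) ^ L / sqrt (INR n)) T) with
    (sum_f_R0 (fun L => sum_f_R0 (fun k => (o1 s k * (/ INR n) ^ k / sqrt (INR n)) * (e2 s (L - k) * (/ INR n) ^ (L - k))) L) T).
  - apply (product_err (sinh ww) KK (fun k => o1 s k * (/ INR n) ^ k / sqrt (INR n)) (fun i => e2 s i * (/ INR n) ^ i) (sinh th * pp / (1 - qq)) (sinh th * pp) (/ (1 - rr)) qq rr T).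
    + intros t. replace (sinh th * pp / (1 - qq) * qq ^ S t) with (sinh th * pp * (qq ^ S t / (1 - qq))) by (unfold Rdiv; ring).
      apply odd_approx.
    + apply odd_coef.
    + apply K_approx.
    + apply KK_abs.
  - apply sum_eq. intros L _. unfold o3. rewrite sum_range_0. unfold Rdiv at 2.
    rewrite Rmult_assoc, (Rmult_comm (sum_f_R0 _ L)), scal_sum. apply sum_eq. intros k Hk.
    replace ((/ INR n) ^ L) with ((/ INR n) ^ k * (/ INR n) ^ (L - k)). unfold Rdiv. ring.
    rewrite <- pow_add. f_equal. lia.
Qed.


Lemma geom_psum T : sum_f_R0 (fun k => (4/5) ^ k) T <= 5.
Proof.
  apply Rle_trans with (/ (1 - 4/5)); [|right; field]. apply psum_le.
  apply is_series_geom. rewrite Rabs_right; lra. intros; apply pow_le; lra.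
Qed.

Lemma err_simpl C T : 0 <= C ->
  C / (1 - qq) * qq ^ (S T) + sum_f_R0 (fun k => C * qq ^ k * (/ (1 - rr) * rr ^ (S (T - k)))) T
  <= 9 * C * rr ^ (S T).
Proof.
  intros HC. assert (Hq0 := qq_pos). assert (Hq1 := qq_le). assert (Hr := rr_bounds).
  assert (Hqr : qq = 4/5 * rr) by (unfold rr; field).
  assert (H1 : qq ^ S T <= rr ^ S T) by (apply pow_incr; lra).
  assert (H2 : 0 <= rr ^ S T) by (apply pow_le; lra).
  assert (E : sum_f_R0 (fun k => C * qq ^ k * (/ (1 - rr) * rr ^ (S (T - k)))) T =
     C / (1 - rr) * rr ^ S T * sum_f_R0 (fun k => (4/5) ^ k) T).
  { rewrite scal_sum. apply sum_eq. intros k Hk. rewrite Hqr, Rpow_mult_distr.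
    assert (Ep : rr ^ S T = rr ^ k * rr ^ S (T - k)) by (rewrite <- pow_add; f_equal; lia).
    rewrite Ep. field. lra. }
  rewrite E. assert (Hg := geom_psum T).
  assert (0 <= sum_f_R0 (fun k => (4/5) ^ k) T) by (apply cond_pos_sum; intros; apply pow_le; lra).
  assert (H3 : C / (1 - qq) * qq ^ S T <= C * (4/3) * rr ^ S T).
  { assert (/ (1 - qq) <= 4/3).
    { replace (4/3) with (/ (3/4)) by field. apply Rinv_le_contravar; lra. }
    assert (0 <= / (1 - qq)) by (left; apply Rinv_0_lt_compat; lra).
    assert (0 <= qq ^ S T) by (apply pow_le; lra).
    unfold Rdiv at 1. apply Rmult_le_compat; auto. apply Rmult_le_pos; auto.
    apply Rmult_le_compat_l; auto. }
  assert (H4 : C / (1 - rr) * rr ^ S T * sum_f_R0 (fun k => (4/5) ^ k) T <= 80/11 * C * rr ^ S T).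
  { assert (/ (1 - rr) <= 16/11).
    { replace (16/11) with (/ (11/16)) by field. apply Rinv_le_contravar; lra. }
    assert (0 <= / (1 - rr)) by (left; apply Rinv_0_lt_compat; lra).
    unfold Rdiv. 
    apply Rle_trans with (C * (16/11) * rr ^ S T * 5).
    apply Rmult_le_compat; auto.
    apply Rmult_le_pos; auto. apply Rmult_le_pos; auto.
    apply Rmult_le_compat_r; auto. apply Rmult_le_compat_l; auto.
    right; field. }
  assert (0 <= C * rr ^ S T) by (apply Rmult_le_pos; auto).
  lra.
Qed.

Lemma sinh_nonneg x : 0 <= x -> 0 <= sinh x.
Proof.
  intros Hx. unfold sinh. destruct Hx as [Hx| <-].
  - assert (exp (- x) < exp x) by (apply exp_increasing; lra). lra.
  - rewrite Ropp_0. lra.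
Qed.
Lemma sinh_le_cosh x : sinh x <= cosh x.
Proof. unfold sinh, cosh. assert (0 < exp (- x)) by apply exp_pos. lra. Qed.
Lemma cosh_pos x : 0 < cosh x.
Proof. unfold cosh. assert (0 < exp (- x)) by apply exp_pos. assert (0 < exp x) by apply exp_pos. lra. Qed.

Definition bb := sqrt rr.

Lemma pow_le_decr b a c : 0 <= b <= 1 -> (a <= c)%nat -> b ^ c <= b ^ a.
Proof.
  intros Hb Hac. induction Hac. lra.
  simpl. apply Rle_trans with (b ^ m); auto.
  assert (0 <= b ^ m) by (apply pow_le; lra). nra.
Qed.

Lemma total_err M1 M2 N : (N + 2 <= 2 * S M1)%nat -> (N + 2 <= 2 * S M2 + 1)%nat ->
  Rabs ((cosh ww + sinh ww) * KK -
    (sum_f_R0 (fun L => e3 s L * (/ INR n) ^ L) M1 +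
     sum_f_R0 (fun L => o3 s L * (/ INR n) ^ L / sqrt (INR n)) M2))
  <= 18 * cosh th * bb ^ (N + 2).
Proof.
  intros H1 H2.
  assert (He := even_err M1). assert (Ho := odd_err M2).
  assert (Hth := th_nonneg). assert (Hp := pp_pos). assert (Hr := rr_bounds).
  assert (Hsh := sinh_nonneg th Hth). assert (Hsc := sinh_le_cosh th). assert (Hc := cosh_pos th).
  assert (Se := err_simpl (cosh th) M1 ltac:(lra)).
  assert (So := err_simpl (sinh th * pp) M2 ltac:(apply Rmult_le_pos; lra)).
  assert (Hbb : 0 <= bb <= 1).
  { unfold bb. split. apply sqrt_pos. rewrite <- sqrt_1. apply sqrt_le_1_alt. lra. }
  assert (Hpb : pp <= bb).
  { unfold pp, bb. apply sqrt_le_1_alt. unfold rr. assert (H := qq_pos). lra. }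
  assert (Hsq : rr = bb ^ 2) by (unfold bb; rewrite pow2_sqrt; lra).
  assert (R1 : rr ^ S M1 <= bb ^ (N + 2)).
  { rewrite Hsq, <- pow_mult. apply pow_le_decr; auto. }
  assert (R2 : pp * rr ^ S M2 <= bb ^ (N + 2)).
  { rewrite Hsq, <- pow_mult. apply Rle_trans with (bb ^ (2 * S M2 + 1)).
    rewrite pow_add, pow_1, Rmult_comm. apply Rmult_le_compat_l. apply pow_le; lra. auto.
    apply pow_le_decr; auto. }
  assert (0 <= rr ^ S M2) by (apply pow_le; lra).
  replace ((cosh ww + sinh ww) * KK -
    (sum_f_R0 (fun L => e3 s L * (/ INR n) ^ L) M1 +
     sum_f_R0 (fun L => o3 s L * (/ INR n) ^ L / sqrt (INR n)) M2)) with
    ((cosh ww * KK - sum_f_R0 (fun L => e3 s L * (/ INR n) ^ L) M1) +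
     (sinh ww * KK - sum_f_R0 (fun L => o3 s L * (/ INR n) ^ L / sqrt (INR n)) M2)) by ring.
  eapply Rle_trans. apply Rabs_triang.
  assert (A1 : 9 * cosh th * rr ^ S M1 <= 9 * cosh th * bb ^ (N + 2)).
  { apply Rmult_le_compat_l; auto. lra. }
  assert (A2 : 9 * (sinh th * pp) * rr ^ S M2 <= 9 * cosh th * bb ^ (N + 2)).
  { replace (9 * (sinh th * pp) * rr ^ S M2) with (9 * sinh th * (pp * rr ^ S M2)) by ring.
    apply Rmult_le_compat; try lra; apply Rmult_le_pos; lra. }
  lra.
Qed.

Lemma C2_eq N : C2 N s * Rpower (INR n) (- ((INR N + 2) / 2)) = 16/11 * bb ^ (N + 2).
Proof.
  assert (Hs0 := sR_pos). assert (Hr := rr_bounds).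
  assert (Hb : 0 < bb) by (apply sqrt_lt_R0; lra).
  rewrite <- (Rpower_pow (N + 2) bb Hb). unfold bb. rewrite <- Rpower_sqrt by lra.
  rewrite Rpower_mult. unfold rr, qq.
  replace (5 * (INR s / INR n) / 4) with ((5 * INR s / 4) * / INR n) by (field; lra).
  rewrite <- Rpower_mult_distr by (try apply Rinv_0_lt_compat; lra).
  assert (Einv : forall y, Rpower (/ INR n) y = Rpower (INR n) (- y)).
  { intros y. unfold Rpower. rewrite ln_Rinv by lra. f_equal. ring. }
  rewrite Einv. rewrite plus_INR. simpl (INR 2).
  replace (/ 2 * (INR N + (1 + 1))) with ((INR N + 2) / 2) by field.
  replace (Rpower (5 * INR s / 4) ((INR N + 2) / 2)) with (Rpower (5 * INR s / 4) (INR N / 2) * (5 * INR s / 4)).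
  unfold C2. field.
  replace ((INR N + 2) / 2) with (INR N / 2 + 1) by field.
  rewrite Rpower_plus, Rpower_1 by lra. reflexivity.
Qed.
End Main.

Lemma ww_eq s n : (1 <= s)%nat -> 0 < INR n ->
  2 * PI * sqrt ((INR n + INR s) / 3) = 2 * PI * sqrt (INR n / 3) + ww s n.
Proof.
  intros Hs Hn. assert (Hs0 : 0 < INR s) by (apply lt_0_INR; lia).
  unfold ww, th, uu, pp, qq.
  replace (1 + INR s / INR n) with ((INR n + INR s) / INR n) by (field; lra).
  rewrite !sqrt_div_alt by lra.
  assert (0 < sqrt 3) by (apply sqrt_lt_R0; lra).
  assert (0 < sqrt (INR s)) by (apply sqrt_lt_R0; lra).
  assert (0 < sqrt (INR n)) by (apply sqrt_lt_R0; lra).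
  field. lra.
Qed.

Lemma mainterm_rel s n : (1 <= s)%nat -> 0 < INR n ->
  mainterm (INR n + INR s) = mainterm (INR n) * ((cosh (ww s n) + sinh (ww s n)) * KK s n).
Proof.
  intros Hs Hn. assert (Hs0 : 0 < INR s) by (apply lt_0_INR; lia).
  assert (Ecs : cosh (ww s n) + sinh (ww s n) = exp (ww s n)) by (unfold cosh, sinh; field).
  rewrite Ecs. unfold mainterm. rewrite ww_eq by auto. rewrite exp_plus.
  assert (Eq : INR n + INR s = INR n * (1 + qq s n)) by (unfold qq; field; lra).
  assert (0 < qq s n) by (unfold qq; apply Rdiv_lt_0_compat; lra).
  rewrite Eq. rewrite <- Rpower_mult_distr by lra.
  unfold KK. replace (-5/4) with (- (5/4)) by field. rewrite Rpower_Ropp.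
  assert (0 < Rpower (INR n) (5/4)) by apply exp_pos.
  assert (0 < Rpower (1 + qq s n) (5/4)) by apply exp_pos.
  assert (0 < Rpower 3 (3/4)) by apply exp_pos.
  assert (0 < sqrt PI) by (apply sqrt_lt_R0, PI_RGT_0).
  field. repeat split; lra.
Qed.

Lemma C3_ge N s : (1 <= s)%nat -> 20.5 * C2 N s * kappa s <= C3 N s.
Proof.
  intros Hs. assert (Hs0 : 0 < INR s) by (apply lt_0_INR; lia).
  assert (Hk : 0 < kappa s) by (unfold kappa; apply cosh_pos).
  assert (0 < C2 N s).
  { unfold C2. apply Rmult_lt_0_compat. apply Rdiv_lt_0_compat; lra. apply exp_pos. }
  assert (0 < Defs.C1 N s).
  { unfold Defs.C1. apply Rmult_lt_0_compat; auto. apply Rmult_lt_0_compat. lra. apply exp_pos. }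
  assert (0 <= sqrt (INR s)) by apply sqrt_pos.
  assert (0 <= INR s * C2 N s * kappa s) by (apply Rmult_le_pos; [apply Rmult_le_pos|]; lra). unfold C3.
  assert (0 <= sqrt (INR s) * C2 N s) by (apply Rmult_le_pos; lra).
  nra.
Qed.

Lemma dd2_even s (x : R) L : 0 < x ->
  dd2 s (2 * L) / Rpower x (INR (2 * L) / 2) = e3 s L * (/ x) ^ L.
Proof.
  intros Hx. assert (E : dd2 s (2 * L) = e3 s L).
  { unfold dd2. replace (Nat.even (2 * L)) with true by (rewrite Nat.even_mul; reflexivity).
    rewrite Nat.div2_double. reflexivity. }
  rewrite E.
  rewrite mult_INR. simpl (INR 2). replace ((1 + 1) * INR L / 2) with (INR L) by field.
  rewrite Rpower_pow by auto. rewrite pow_inv. reflexivity.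
Qed.

Lemma dd2_odd s (x : R) L : 0 < x ->
  dd2 s (2 * L + 1) / Rpower x (INR (2 * L + 1) / 2) = o3 s L * (/ x) ^ L / sqrt x.
Proof.
  intros Hx. assert (E : dd2 s (2 * L + 1) = o3 s L).
  { unfold dd2. replace (Nat.even (2 * L + 1)) with false by (rewrite Nat.even_add, Nat.even_mul; reflexivity).
    replace (2 * L + 1)%nat with (S (2 * L)) by lia. rewrite Nat.div2_succ_double. reflexivity. }
  rewrite E. replace (2 * L + 1)%nat with (S (2 * L)) by lia.
  rewrite S_INR, mult_INR. simpl (INR 2). replace (((1 + 1) * INR L + 1) / 2) with (INR L + / 2) by field.
  rewrite Rpower_plus, Rpower_pow, Rpower_sqrt by auto. rewrite pow_inv.
  assert (0 < x ^ L) by (apply pow_lt; auto). assert (0 < sqrt x) by (apply sqrt_lt_R0; auto).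
  field. lra.
Qed.

Lemma sum_split N s (x : R) : 0 < x -> exists M1 M2,
  (N + 2 <= 2 * S M1)%nat /\ (N + 2 <= 2 * S M2 + 1)%nat /\
  sum_range 0 (N + 1) (fun m => dd2 s m / Rpower x (INR m / 2)) =
  sum_f_R0 (fun L => e3 s L * (/ x) ^ L) M1 + sum_f_R0 (fun L => o3 s L * (/ x) ^ L / sqrt x) M2.
Proof.
  intros Hx. rewrite sum_range_0.
  destruct (Nat.Even_or_Odd N) as [[K HK]|[K HK]].
  - exists K, K. split; [lia|]. split; [lia|].
    replace (N + 1)%nat with (2 * K + 1)%nat by lia. rewrite sf_even_odd.
    f_equal; apply sum_eq; intros; [apply dd2_even|apply dd2_odd]; auto.
  - exists (S K), K. split; [lia|]. split; [lia|].
    replace (N + 1)%nat with (S (2 * K + 1))%nat by lia. rewrite tech5, sf_even_odd.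
    rewrite (tech5 (fun L => e3 s L * (/ x) ^ L) K).
    replace (S (2 * K + 1)) with (2 * S K)%nat by lia.
    rewrite <- dd2_even by auto.
    rewrite (sum_eq (fun i => dd2 s (2 * i) / Rpower x (INR (2 * i) / 2)) (fun L => e3 s L * (/ x) ^ L)) by (intros; apply dd2_even; auto).
    rewrite (sum_eq (fun i => dd2 s (2 * i + 1) / Rpower x (INR (2 * i + 1) / 2)) (fun L => o3 s L * (/ x) ^ L / sqrt x)) by (intros; apply dd2_odd; auto).
    ring.
Qed.

Theorem lemma5p3 (N s n : nat) (hN : (3 <= N)%nat) (hs : (1 <= s)%nat)
  (hn : (n1 s <= n)%nat) :
  exists E : R,
    Rabs E <= C3 N s * Rpower (INR n) (- ((INR N + 2) / 2)) /\
    mainterm (INR n + INR s) =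
    mainterm (INR n) *
      (sum_range 0 (N + 1) (fun m => dd2 s m / Rpower (INR n) (INR m / 2)) + E).
Proof.
  assert (H4 : (4 * s <= n)%nat).
  { unfold n1 in hn. destruct (s <=? 1)%nat eqn:E.
    - apply Nat.leb_le in E. lia.
    - apply Nat.leb_gt in E. assert (s ^ 4 = s * s * s * s)%nat by (simpl; lia). rewrite H in hn. assert (4 <= s * s)%nat by nia. assert (8 <= s * s * s)%nat by nia. nia. }
  assert (Hn : 0 < INR n) by (apply lt_0_INR; lia).
  assert (Hs0 : 0 < INR s) by (apply lt_0_INR; lia).
  assert (Hq : INR s / INR n <= 1/4).
  { apply le_INR in H4. rewrite mult_INR in H4. simpl (INR 4) in H4.
    apply Rmult_le_reg_r with (INR n); auto. unfold Rdiv. rewrite Rmult_assoc, Rinv_l by lra. lra. }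
  destruct (sum_split N s (INR n) Hn) as [M1 [M2 [H1 [H2 Hsum]]]].
  rewrite Hsum.
  set (T := sum_f_R0 (fun L => e3 s L * (/ INR n) ^ L) M1 +
            sum_f_R0 (fun L => o3 s L * (/ INR n) ^ L / sqrt (INR n)) M2).
  exists ((cosh (ww s n) + sinh (ww s n)) * KK s n - T).
  split.
  - eapply Rle_trans. apply (total_err s n hs Hn Hq M1 M2 N H1 H2).
    assert (HC := C3_ge N s hs).
    assert (HE := C2_eq s n hs Hn Hq N).
    assert (Hk : 0 < kappa s) by (unfold kappa; apply cosh_pos).
    assert (HR : 0 < Rpower (INR n) (- ((INR N + 2) / 2))) by apply exp_pos.
    assert (Hb : 0 <= bb s n ^ (N + 2)).
    { apply pow_le. unfold bb. apply sqrt_pos. }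
    change (cosh (th s)) with (kappa s).
    apply Rle_trans with (20.5 * C2 N s * kappa s * Rpower (INR n) (- ((INR N + 2) / 2))).
    + replace (20.5 * C2 N s * kappa s * Rpower (INR n) (- ((INR N + 2) / 2))) with
        (20.5 * kappa s * (C2 N s * Rpower (INR n) (- ((INR N + 2) / 2)))) by ring.
      rewrite HE. nra.
    + apply Rmult_le_compat_r; lra.
  - rewrite (mainterm_rel s n hs Hn). ring.
Qed.
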